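(* If a Sturmian sequence $\epsilon\in\{H,V\}^{\mathbb{Z}}$ is almost symmetric, then so is its derived sequence $\epsilon'$.
   Context: A Sturmian sequence is a biinfinite sequence over two letters that is not eventually periodic and has exactly $n+1$ distinct subwords of each length $n$; in such a sequence one of the letters is isolated (never occurs twice consecutively). The derived sequence $\epsilon'$ is obtained from $\epsilon$ by deleting one occurrence of the non-isolated letter from each maximal block of consecutive occurrences of it. A sequence $\epsilon$ is almost symmetric if there is $N$ with $\epsilon_{N+k}=\epsilon_{N-k-1}$ for all $k\ge1$ and $\epsilon_N\ne\epsilon_{N-1}$. *)

(* Defs.v *)
From Stdlib Require Import ZArith List.
Import ListNotations.
Open Scope Z_scope.

Inductive letter : Type := H | V.

Definition biseq := Z -> letter.

Definition factor (e : biseq) (i : Z) (n : nat) : list letter :=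
  map (fun k : nat => e (i + Z.of_nat k)) (seq 0 n).

Definition has_complexity_succ (e : biseq) (n : nat) : Prop :=
  exists l : list (list letter),
    length l = S n /\ NoDup l /\
    (forall w, In w l <-> exists i, factor e i n = w).

Definition eventually_periodic (e : biseq) : Prop :=
  (exists p N, 0 < p /\ forall i, N <= i -> e (i + p) = e i) \/
  (exists p N, 0 < p /\ forall i, i <= N -> e (i - p) = e i).

Definition sturmian (e : biseq) : Prop :=
  ~ eventually_periodic e /\ forall n : nat, has_complexity_succ e n.

Definition non_isolated (e : biseq) (b : letter) : Prop :=
  exists i, e i = b /\ e (i + 1) = b.

(* Position i is deleted when deriving w.r.t. the non-isolated letter b:
   it is the first occurrence of b in its maximal block of b's. *)
Definition deleted (e : biseq) (b : letter) (i : Z) : Prop :=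
  e i = b /\ e (i - 1) <> b.

(* e' is (an indexing of) the derived sequence of e: the subsequence of e
   consisting of the non-deleted positions, listed in increasing order via a
   strictly increasing enumeration phi whose range is exactly the kept set. *)
Definition derived (e e' : biseq) : Prop :=
  exists b : letter, non_isolated e b /\
  exists phi : Z -> Z,
    (forall m n, m < n -> phi m < phi n) /\
    (forall n, ~ deleted e b (phi n)) /\
    (forall i, ~ deleted e b i -> exists n, phi n = i) /\
    (forall n, e' n = e (phi n)).

Definition almost_symmetric (e : biseq) : Prop :=
  exists N : Z,
    (forall k : Z, 1 <= k -> e (N + k) = e (N - k - 1)) /\ e N <> e (N - 1).

(* Main.v *)
Require Import Defs.
From Stdlib Require Import ZArith List Lia Classical.
Import ListNotations.
Open Scope Z_scope.

Lemma letter_dec (x y : letter) : {x = y} + {x <> y}.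
Proof. decide equality. Defined.

Definition other (b : letter) := match b with H => V | V => H end.

Lemma letter_cases b x : x = b \/ x = other b.
Proof. destruct b, x; auto. Qed.
Lemma other_neq b : other b <> b.
Proof. destruct b; discriminate. Qed.

Lemma factor2 e i : factor e i 2 = [e i; e (i+1)].
Proof. unfold factor. simpl. rewrite Z.add_0_r. reflexivity. Qed.

Lemma no_trans_periodic e c d : c <> d -> (forall x, x = c \/ x = d) ->
  ~ (exists i, e i = c /\ e (i+1) = d) -> forall j, e j = c -> eventually_periodic e.
Proof.
  intros Hcd Hx Hno j Hj. left. exists 1, j. split; [lia|].
  assert (Hm : forall m : nat, e (j + Z.of_nat m) = c).
  { induction m. simpl. rewrite Z.add_0_r; auto.
    replace (j + Z.of_nat (S m)) with ((j + Z.of_nat m) + 1) by lia.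
    destruct (Hx (e (j + Z.of_nat m + 1))) as [h|h]; auto.
    exfalso; apply Hno; eexists; eauto. }
  intros i Hi.
  replace i with (j + Z.of_nat (Z.to_nat (i - j))) by lia.
  rewrite Hm. replace (j + Z.of_nat (Z.to_nat (i - j)) + 1) with (j + Z.of_nat (S (Z.to_nat (i - j)))) by lia.
  apply Hm.
Qed.

Lemma sturm_isolated e b : sturmian e -> non_isolated e b ->
  forall i, e i = other b -> e (i+1) = b.
Proof.
  intros [Hnp Hc] [j [Hj1 Hj2]] i Hi.
  destruct (letter_cases b (e (i+1))) as [h|h]; auto. exfalso.
  assert (Hx : forall x, x = b \/ x = other b) by (intro; apply letter_cases).
  assert (Hx' : forall x, x = other b \/ x = b) by (intro x; destruct (Hx x); auto).
  destruct (classic (exists i, e i = b /\ e (i+1) = other b)) as [[p [Hp1 Hp2]]|Hn1].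
  2:{ apply Hnp. apply (no_trans_periodic e b (other b)) with (j := j); auto.
      intro; apply (other_neq b); auto. }
  destruct (classic (exists i, e i = other b /\ e (i+1) = b)) as [[q [Hq1 Hq2]]|Hn2].
  2:{ apply Hnp. apply (no_trans_periodic e (other b) b) with (j := i); auto. apply other_neq. }
  destruct (Hc 2%nat) as [l [Hlen [Hnd Hin]]].
  assert (I1 : In [b;b] l) by (apply Hin; exists j; rewrite factor2, Hj1, Hj2; reflexivity).
  assert (I2 : In [other b;other b] l) by (apply Hin; exists i; rewrite factor2, Hi, h; reflexivity).
  assert (I3 : In [b;other b] l) by (apply Hin; exists p; rewrite factor2, Hp1, Hp2; reflexivity).
  assert (I4 : In [other b;b] l) by (apply Hin; exists q; rewrite factor2, Hq1, Hq2; reflexivity).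
  assert (Hl := NoDup_incl_length (l:=[[b;b];[other b;other b];[b;other b];[other b;b]]) (l' := l)).
  simpl in Hl. enough (4 <= length l)%nat by lia. apply Hl.
  - destruct b; repeat constructor; simpl; intuition discriminate.
  - intros w Hw; simpl in Hw; intuition (subst; auto).
Qed.

Lemma sturm_nonisol e : sturmian e -> exists b, non_isolated e b.
Proof.
  intros [Hnp _].
  destruct (classic (non_isolated e H)) as [h|h]; [eauto|].
  destruct (classic (non_isolated e V)) as [h'|h']; [eauto|].
  exfalso; apply Hnp. right. exists 2, 0. split; [lia|]. intros i _.
  assert (A : forall k, e (k+1) <> e k).
  { intros k E. destruct (e k) eqn:Ek; [apply h|apply h']; exists k; auto. }
  pose proof (A (i-2)) as A1. pose proof (A (i-1)) as A2.
  replace (i - 2 + 1) with (i-1) in A1 by lia. replace (i - 1 + 1) with i in A2 by lia.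
  destruct (e i), (e (i-1)), (e (i-2)); congruence.
Qed.

Definition deleted_dec e b i : {deleted e b i} + {~ deleted e b i}.
Proof.
  unfold deleted. destruct (letter_dec (e i) b), (letter_dec (e (i-1)) b).
  - right; intros [_ h]; auto.
  - left; auto.
  - right; intros [h _]; auto.
  - right; intros [h _]; auto.
Defined.

Lemma del_next e b i : deleted e b i -> ~ deleted e b (i+1).
Proof. intros [h _] [_ h']. replace (i+1-1) with i in h' by lia. auto. Qed.

Definition nxt e b x := if deleted_dec e b (x+1) then x+2 else x+1.
Definition prv e b x := if deleted_dec e b (x-1) then x-2 else x-1.

Lemma K_nxt e b x : ~ deleted e b (nxt e b x).
Proof. unfold nxt; destruct deleted_dec as [d|d]; auto.
  replace (x+2) with (x+1+1) by lia. apply del_next; auto. Qed.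
Lemma K_prv e b x : ~ deleted e b (prv e b x).
Proof. unfold prv; destruct deleted_dec as [d|d]; auto.
  intro d'. apply (del_next e b (x-2)); auto. replace (x-2+1) with (x-1) by lia; auto. Qed.

Lemma nxt_prv e b x : ~ deleted e b x -> nxt e b (prv e b x) = x.
Proof. intro Kx. unfold prv. destruct (deleted_dec e b (x-1)) as [d|d]; unfold nxt.
  - replace (x-2+1) with (x-1) by lia. destruct deleted_dec; [lia|tauto].
  - replace (x-1+1) with x by lia. destruct deleted_dec; [tauto|lia]. Qed.
Lemma prv_nxt e b x : ~ deleted e b x -> prv e b (nxt e b x) = x.
Proof. intro Kx. unfold nxt. destruct (deleted_dec e b (x+1)) as [d|d]; unfold prv.
  - replace (x+2-1) with (x+1) by lia. destruct deleted_dec; [lia|tauto].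
  - replace (x+1-1) with x by lia. destruct deleted_dec; [tauto|lia]. Qed.
Lemma nxt_gt e b x : x < nxt e b x.
Proof. unfold nxt; destruct deleted_dec; lia. Qed.

Definition p0 e b := if deleted_dec e b 0 then -1 else 0.
Lemma K_p0 e b : ~ deleted e b (p0 e b).
Proof. unfold p0; destruct deleted_dec as [d|d]; auto.
  intro d'. apply (del_next e b (-1)); auto. Qed.

Fixpoint itn (f : Z -> Z) (n : nat) (x : Z) := match n with O => x | S n => f (itn f n x) end.

Definition phi0 e b (n : Z) : Z :=
  match n with
  | Z0 => p0 e b
  | Zpos p => itn (nxt e b) (Pos.to_nat p) (p0 e b)
  | Zneg p => itn (prv e b) (Pos.to_nat p) (p0 e b)
  end.

Lemma phi0_pos e b (m : nat) : phi0 e b (Z.of_nat m) = itn (nxt e b) m (p0 e b).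
Proof. destruct m; simpl; auto. rewrite SuccNat2Pos.id_succ. auto. Qed.
Lemma phi0_neg e b (m : nat) : phi0 e b (- Z.of_nat m) = itn (prv e b) m (p0 e b).
Proof. destruct m; simpl; auto. rewrite SuccNat2Pos.id_succ. auto. Qed.

Lemma K_phi0 e b n : ~ deleted e b (phi0 e b n).
Proof. destruct n; simpl. apply K_p0.
  destruct (Pos.to_nat p); simpl; [apply K_p0|apply K_nxt].
  destruct (Pos.to_nat p); simpl; [apply K_p0|apply K_prv]. Qed.

Lemma phi0_succ e b n : phi0 e b (n+1) = nxt e b (phi0 e b n).
Proof.
  destruct (Z_le_gt_dec 0 n).
  - replace n with (Z.of_nat (Z.to_nat n)) by lia.
    replace (Z.of_nat (Z.to_nat n) + 1) with (Z.of_nat (S (Z.to_nat n))) by lia.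
    rewrite !phi0_pos. reflexivity.
  - replace n with (- Z.of_nat (S (Z.to_nat (- n - 1)))) by lia.
    replace (- Z.of_nat (S (Z.to_nat (- n - 1))) + 1) with (- Z.of_nat (Z.to_nat (- n - 1))) by lia.
    rewrite !phi0_neg. simpl. rewrite nxt_prv; auto.
    rewrite <- phi0_neg. apply K_phi0.
Qed.

Lemma phi0_pred e b n : phi0 e b (n-1) = prv e b (phi0 e b n).
Proof. replace n with (n-1+1) at 2 by lia. rewrite phi0_succ, prv_nxt; auto. apply K_phi0. Qed.

Lemma phi0_mono e b : forall m n, m < n -> phi0 e b m < phi0 e b n.
Proof.
  intros m n Hmn.
  assert (A : forall k : nat, phi0 e b m < phi0 e b (m + 1 + Z.of_nat k)).
  { induction k. rewrite Z.add_0_r, phi0_succ. apply nxt_gt.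
    replace (m + 1 + Z.of_nat (S k)) with (m + 1 + Z.of_nat k + 1) by lia.
    rewrite phi0_succ. pose proof (nxt_gt e b (phi0 e b (m + 1 + Z.of_nat k))). lia. }
  specialize (A (Z.to_nat (n - m - 1))). replace (m + 1 + Z.of_nat (Z.to_nat (n - m - 1))) with n in A by lia.
  auto.
Qed.

Lemma del_prev e b i : deleted e b i -> ~ deleted e b (i-1).
Proof. intros d d'. apply (del_next e b (i-1)); auto. replace (i-1+1) with i by lia; auto. Qed.

Lemma phi0_surj e b : forall i, ~ deleted e b i -> exists n, phi0 e b n = i.
Proof.
  set (q := p0 e b).
  assert (Up : forall k : nat, forall i, ~ deleted e b i -> q <= i <= q + Z.of_nat k -> exists n, phi0 e b n = i).
  { induction k; intros i Ki Hi.
    - exists 0. simpl. fold q. lia.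
    - destruct (Z_le_gt_dec i (q + Z.of_nat k)). apply IHk; auto; lia.
      assert (i = q + Z.of_nat k + 1) by lia.
      destruct (deleted_dec e b (i-1)) as [d|d].
      + assert (i - 1 <> q) by (intro E; apply (K_p0 e b); fold q; rewrite <- E; auto).
        destruct (IHk (i-2)) as [n Hn]. replace (i-2) with (i-1-1) by lia. apply del_prev; auto. lia.
        exists (n+1). rewrite phi0_succ, Hn. unfold nxt. replace (i-2+1) with (i-1) by lia.
        destruct deleted_dec; [lia|tauto].
      + destruct (IHk (i-1)) as [n Hn]; auto. lia.
        exists (n+1). rewrite phi0_succ, Hn. unfold nxt. replace (i-1+1) with i by lia.
        destruct deleted_dec; [tauto|lia]. }
  assert (Dn : forall k : nat, forall i, ~ deleted e b i -> q - Z.of_nat k <= i <= q -> exists n, phi0 e b n = i).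
  { induction k; intros i Ki Hi.
    - exists 0. simpl. fold q. lia.
    - destruct (Z_le_gt_dec (q - Z.of_nat k) i). apply IHk; auto; lia.
      assert (i = q - Z.of_nat k - 1) by lia.
      destruct (deleted_dec e b (i+1)) as [d|d].
      + assert (i + 1 <> q) by (intro E; apply (K_p0 e b); fold q; rewrite <- E; auto).
        destruct (IHk (i+2)) as [n Hn]. intro d'. apply (del_next e b (i+1)); auto.
        replace (i+1+1) with (i+2) by lia; auto. lia.
        exists (n-1). rewrite phi0_pred, Hn. unfold prv. replace (i+2-1) with (i+1) by lia.
        destruct deleted_dec; [lia|tauto].
      + destruct (IHk (i+1)) as [n Hn]; auto. lia.
        exists (n-1). rewrite phi0_pred, Hn. unfold prv. replace (i+1-1) with i by lia.
        destruct deleted_dec; [tauto|lia]. }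
  intros i Ki. destruct (Z_le_gt_dec q i).
  - apply (Up (Z.to_nat (i - q))); auto; lia.
  - apply (Dn (Z.to_nat (q - i))); auto; lia.
Qed.

Lemma derived_exists e b : non_isolated e b -> exists e', derived e e'.
Proof.
  intro Hb. exists (fun n => e (phi0 e b n)). exists b. split; auto.
  exists (phi0 e b). split; [apply phi0_mono|]. split; [apply K_phi0|].
  split; [apply phi0_surj|]. reflexivity.
Qed.

Lemma mono_rev (phi : Z -> Z) : (forall m n, m < n -> phi m < phi n) ->
  forall m n, phi m < phi n -> m < n.
Proof. intros Hm m n H. destruct (Z.lt_trichotomy m n) as [h|[h|h]]; auto;
  [subst; lia | apply Hm in h; lia]. Qed.

Lemma mono_le (phi : Z -> Z) : (forall m n, m < n -> phi m < phi n) ->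
  forall m n, m <= n -> phi m <= phi n.
Proof. intros Hm m n H. destruct (Z.eq_dec m n); [subst; lia|]. assert (m < n) by lia.
  apply Hm in H0; lia. Qed.

Lemma L_between (phi : Z -> Z) (P : Z -> Prop) : (forall m n, m < n -> phi m < phi n) ->
  (forall i, P i -> exists n, phi n = i) ->
  forall n z, phi n < z < phi (n+1) -> ~ P z.
Proof. intros Hm Hs n z [h1 h2] Pz. destruct (Hs z Pz) as [m <-].
  apply (mono_rev phi Hm) in h1. apply (mono_rev phi Hm) in h2. lia. Qed.

Lemma L_prev (phi : Z -> Z) (P : Z -> Prop) : (forall m n, m < n -> phi m < phi n) ->
  (forall i, P i -> exists n, phi n = i) -> (forall k, P (phi k)) ->
  forall n y, P y -> y < phi n -> (forall z, y < z < phi n -> ~ P z) -> phi (n-1) = y.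
Proof. intros Hm Hs Hk n y Py Hy Hb. destruct (Hs y Py) as [m <-].
  apply (mono_rev phi Hm) in Hy. destruct (Z.eq_dec m (n-1)); [subst; auto|].
  exfalso. apply (Hb (phi (n-1))); auto. split; apply Hm; lia. Qed.

Lemma keptE e b x : ~ deleted e b x <-> (e x = other b \/ e (x-1) = b).
Proof. unfold deleted. destruct (letter_cases b (e x)) as [h|h];
  destruct (letter_cases b (e (x-1))) as [h'|h']; rewrite h, h'; split; intros;
  try pose proof (other_neq b); intuition congruence. Qed.

Lemma main_sym (e e' : biseq) b phi N :
  (forall i, e i = other b -> e (i+1) = b) ->
  (forall m n, m < n -> phi m < phi n) ->
  (forall n, ~ deleted e b (phi n)) ->
  (forall i, ~ deleted e b i -> exists n, phi n = i) ->
  (forall n, e' n = e (phi n)) ->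
  (forall k, 1 <= k -> e (N + k) = e (N - k - 1)) -> e N <> e (N-1) ->
  almost_symmetric e'.
Proof.
  intros Iso Hm Hk Hs He' Hsym Hne.
  pose proof (other_neq b) as Onb.
  set (K := fun x => ~ deleted e b x).
  assert (H1 : forall i, N + 1 <= i -> e (2*N-1-i) = e i).
  { intros i Hi. specialize (Hsym (i - N) ltac:(lia)).
    replace (N + (i - N)) with i in Hsym by lia. replace (N - (i - N) - 1) with (2*N-1-i) in Hsym by lia.
    auto. }
  assert (F0 : e (N-2) = b /\ e (N+1) = b).
  { rewrite <- (H1 (N+1)) by lia. replace (2*N-1-(N+1)) with (N-2) by lia.
    destruct (letter_cases b (e N)) as [h|h].
    - destruct (letter_cases b (e (N-1))) as [h'|h']; [congruence|].
      destruct (letter_cases b (e (N-2))) as [h''|h'']; auto.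
      apply Iso in h''. replace (N-2+1) with (N-1) in h'' by lia. congruence.
    - apply Iso in h. rewrite <- (H1 (N+1)) in h by lia.
      replace (2*N-1-(N+1)) with (N-2) in h by lia. auto. }
  destruct F0 as [F0a F0b].
  set (tau := fun x => if letter_dec (e x) (other b) then 2*N-1-x else 2*N-x).
  assert (F1 : forall x, N+2 <= x -> K x -> tau x <= N-2 /\ K (tau x) /\ e (tau x) = e x).
  { intros x Hx Kx. unfold K in *. rewrite keptE in Kx. unfold tau.
    destruct letter_dec as [a|a].
    - rewrite H1 by lia. split; [lia|]. split; auto. rewrite keptE, H1 by lia. auto.
    - destruct Kx as [Kx|Kx]; [tauto|].
      replace (2*N-x) with (2*N-1-(x-1)) by lia. rewrite H1 by lia.
      split; [lia|]. split.
      + rewrite keptE. right. replace (2*N-1-(x-1)-1) with (2*N-1-x) by lia. rewrite H1 by lia.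
        destruct (letter_cases b (e x)); tauto.
      + destruct (letter_cases b (e x)); congruence. }
  assert (F2 : forall z, z <= N-2 -> K z -> exists x, N+2 <= x /\ K x /\ tau x = z).
  { intros z Hz Kz. unfold K in *. rewrite keptE in Kz.
    destruct (letter_cases b (e z)) as [h|h].
    - destruct Kz as [Kz|Kz]; [congruence|].
      exists (2*N-z). split; [lia|].
      assert (E1 : e (2*N-z) = b).
      { rewrite <- H1 by lia. replace (2*N-1-(2*N-z)) with (z-1) by lia. auto. }
      split. rewrite keptE. right. replace (2*N-z-1) with (2*N-1-z) by lia.
      rewrite <- H1 by lia. replace (2*N-1-(2*N-1-z)) with z by lia. auto.
      unfold tau. destruct letter_dec; [congruence|lia].
    - assert (z <> N-2) by (intro E; subst z; congruence).
      exists (2*N-1-z). split; [lia|].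
      assert (E1 : e (2*N-1-z) = other b).
      { rewrite <- H1 by lia. replace (2*N-1-(2*N-1-z)) with z by lia. auto. }
      split. rewrite keptE. auto.
      unfold tau. destruct letter_dec; [lia|congruence]. }
  assert (F3 : forall x y, K x -> K y -> x < y -> tau y < tau x).
  { intros x y Kx Ky Hxy. unfold K in *. rewrite keptE in Kx, Ky. unfold tau.
    destruct (letter_dec (e x) (other b)), (letter_dec (e y) (other b)); try lia.
    destruct Ky as [Ky|Ky]; [tauto|].
    destruct (Z.eq_dec y (x+1)); [|lia]. subst y. replace (x+1-1) with x in Ky by lia. congruence. }
  assert (C : exists X0, K X0 /\ N <= X0 /\ tau X0 = N-1 /\ K (N-1) /\
     (forall z, K z -> X0 < z -> N+2 <= z) /\ (forall z, N-1 < z < X0 -> ~ K z) /\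
     e X0 <> e (N-1)).
  { destruct (letter_cases b (e N)) as [h|h].
    - assert (h' : e (N-1) = other b) by (destruct (letter_cases b (e (N-1))); congruence).
      exists (N+1). unfold K. rewrite !keptE. replace (N+1-1) with N by lia.
      split; auto. split; [lia|]. split.
      { unfold tau. destruct letter_dec; [congruence|lia]. }
      split; auto. split. intros; lia. split.
      + intros z Hz Kz. assert (z = N) by lia. subst z. apply keptE in Kz.
        destruct Kz; congruence.
      + congruence.
    - exists N. unfold K. rewrite !keptE. split; auto. split; [lia|]. split.
      { unfold tau. destruct letter_dec; [lia|congruence]. }
      split. right. replace (N-1-1) with (N-2) by lia. auto. split.
      + intros z Kz Hz. destruct (Z.eq_dec z (N+1)); [|lia]. subst z.
        apply keptE in Kz. replace (N+1-1) with N in Kz by lia. destruct Kz; congruence.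
      + split; [intros; lia|]. auto. }
  destruct C as [X0 [KX0 [X0N [tX0 [KN1 [Cgt [Cbt Cne]]]]]]].
  destruct (Hs X0 KX0) as [M HM].
  assert (HM1 : phi (M-1) = N-1).
  { apply (L_prev phi K Hm Hs Hk); auto; rewrite HM; auto; lia. }
  assert (Q : forall j : nat, tau (phi (M + Z.of_nat j)) = phi (M - 1 - Z.of_nat j)).
  { induction j.
    - simpl. rewrite Z.add_0_r, Z.sub_0_r, HM, HM1. auto.
    - set (x := phi (M + Z.of_nat j)) in *.
      set (x' := phi (M + Z.of_nat (S j))).
      assert (xx' : x < x') by (apply Hm; lia).
      assert (xX0 : X0 <= x) by (rewrite <- HM; apply (mono_le phi Hm); lia).
      assert (Kx : K x) by apply Hk. assert (Kx' : K x') by apply Hk.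
      assert (x'2 : N + 2 <= x') by (apply Cgt; auto; lia).
      destruct (F1 x' x'2 Kx') as [t1 [t2 t3]].
      assert (tt : tau x' < tau x) by (apply F3; auto).
      assert (up : phi (M - 1 - Z.of_nat j) <= N - 1) by (rewrite <- HM1; apply (mono_le phi Hm); lia).
      replace (M - 1 - Z.of_nat (S j)) with ((M - 1 - Z.of_nat j) - 1) by lia.
      symmetry. apply (L_prev phi K Hm Hs Hk); auto. lia.
      intros z [hz1 hz2] Kz. destruct (F2 z ltac:(lia) Kz) as [w [w1 [w2 w3]]].
      assert (w < x').
      { destruct (Z.lt_trichotomy w x') as [h|[h|h]]; auto. subst; lia.
        pose proof (F3 _ _ Kx' w2 h); lia. }
      assert (x < w).
      { destruct (Z.lt_trichotomy x w) as [h|[h|h]]; auto. subst; lia.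
        pose proof (F3 _ _ w2 Kx h); lia. }
      apply (L_between phi K Hm Hs (M + Z.of_nat j) w); auto.
      unfold x' in *. replace (M + Z.of_nat j + 1) with (M + Z.of_nat (S j)) by lia. lia. }
  exists M. split.
  - intros k Hk1. rewrite !He'.
    pose proof (Q (Z.to_nat k)) as Qk. replace (M + Z.of_nat (Z.to_nat k)) with (M + k) in Qk by lia.
    replace (M - 1 - Z.of_nat (Z.to_nat k)) with (M - k - 1) in Qk by lia.
    rewrite <- Qk. assert (N+2 <= phi (M+k)) by (apply Cgt; [apply Hk|]; rewrite <- HM; apply Hm; lia).
    destruct (F1 (phi (M+k))) as [_ [_ E]]; auto. apply Hk.
  - rewrite !He', HM, HM1. auto.
Qed.

Theorem lemma4p2 (e : biseq) :
  sturmian e -> almost_symmetric e ->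
  (exists e' : biseq, derived e e') /\
  (forall e' : biseq, derived e e' -> almost_symmetric e').
Proof.
  intros Hs [N [Hsym Hne]]. split.
  - destruct (sturm_nonisol e Hs) as [b Hb]. apply (derived_exists e b Hb).
  - intros e' [b [Hb [phi [Hm [Hk [Hsu He']]]]]].
    apply (main_sym e e' b phi N); auto.
    apply sturm_isolated; auto.
Qed.
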